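(* The logic $\mathsf{sCond}_{\mathrm{ACL}}^{\mathbf{UC}}=\mathsf{ICK}\oplus(q\to(p\mathrel{\Box\!\!\!\rightarrow} q))\oplus(p\mathrel{\Box\!\!\!\rightarrow}((p\mathrel{\Box\!\!\!\rightarrow} q)\to q))$ is sound and complete with respect to the class of conditional frames $(X,\leq,\mathcal{R})$ such that for all $x,y\in X$ and $R_a\in\mathcal{R}$: $xR_ay$ implies $x\leq y$, and $x(R_a\circ\leq)y$ implies $y(R_a\circ\leq)y$.
   Context: Formulas: $\phi ::= p\mid\bot\mid\phi\wedge\phi\mid\phi\vee\phi\mid\phi\to\phi\mid\phi\mathrel{\Box\!\!\!\rightarrow}\phi$. $\mathsf{ICK}\oplus\Gamma$ is the smallest set containing intuitionistic propositional logic, $\Gamma$, $(p\mathrel{\Box\!\!\!\rightarrow}(q\wedge r))\leftrightarrow((p\mathrel{\Box\!\!\!\rightarrow} q)\wedge(p\mathrel{\Box\!\!\!\rightarrow} r))$ and $(p\mathrel{\Box\!\!\!\rightarrow}\top)\leftrightarrow\top$, closed under uniform substitution, modus ponens and congruence rules for both arguments of $\mathrel{\Box\!\!\!\rightarrow}$. A conditional frame is $(X,\leq,\mathcal{R})$, $(X,\leq)$ a nonempty preorder, $\mathcal{R}=\{R_a\mid a\text{ an upset}\}$ with $(\leq\circ R_a)\subseteq(R_a\circ\leq)$; valuations assign upsets to letters and $x\models\phi\mathrel{\Box\!\!\!\rightarrow}\psi$ iff every $y$ with $xR_{V(\phi)}y$ satisfies $\psi$. Relation composition $R\circ S$ relates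 $x$ to $z$ if $xRy$ and $ySz$ for some $y$. *)

(* Defs.v *)
Inductive form : Type :=
| Var : nat -> form
| Bot : form
| And : form -> form -> form
| Or : form -> form -> form
| Imp : form -> form -> form
| Cond : form -> form -> form.

Definition Top : form := Imp Bot Bot.
Definition Iff (a b : form) : form := And (Imp a b) (Imp b a).

Fixpoint subst (s : nat -> form) (f : form) : form :=
  match f with
  | Var n => s n
  | Bot => Bot
  | And a b => And (subst s a) (subst s b)
  | Or a b => Or (subst s a) (subst s b)
  | Imp a b => Imp (subst s a) (subst s b)
  | Cond a b => Cond (subst s a) (subst s b)
  end.

Inductive ipc_axiom : form -> Prop :=
| A1 a b : ipc_axiom (Imp a (Imp b a))
| A2 a b c : ipc_axiom (Imp (Imp a (Imp b c)) (Imp (Imp a b) (Imp a c)))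
| A3 a b : ipc_axiom (Imp (And a b) a)
| A4 a b : ipc_axiom (Imp (And a b) b)
| A5 a b : ipc_axiom (Imp a (Imp b (And a b)))
| A6 a b : ipc_axiom (Imp a (Or a b))
| A7 a b : ipc_axiom (Imp b (Or a b))
| A8 a b c : ipc_axiom (Imp (Imp a c) (Imp (Imp b c) (Imp (Or a b) c)))
| A9 a : ipc_axiom (Imp Bot a).

Definition p : form := Var 0.
Definition q : form := Var 1.
Definition r : form := Var 2.

Inductive ICK (Gamma : form -> Prop) : form -> Prop :=
| ICK_ipc a : ipc_axiom a -> ICK Gamma a
| ICK_gamma a : Gamma a -> ICK Gamma a
| ICK_conj : ICK Gamma (Iff (Cond p (And q r)) (And (Cond p q) (Cond p r)))
| ICK_top : ICK Gamma (Iff (Cond p Top) Top)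
| ICK_us s a : ICK Gamma a -> ICK Gamma (subst s a)
| ICK_mp a b : ICK Gamma (Imp a b) -> ICK Gamma a -> ICK Gamma b
| ICK_congl a b c : ICK Gamma (Iff a b) -> ICK Gamma (Iff (Cond a c) (Cond b c))
| ICK_congr a b c : ICK Gamma (Iff a b) -> ICK Gamma (Iff (Cond c a) (Cond c b)).

Inductive Gamma_UC : form -> Prop :=
| G1 : Gamma_UC (Imp q (Cond p q))
| G2 : Gamma_UC (Cond p (Imp (Cond p q) q)).

Definition sCond_ACL_UC : form -> Prop := ICK Gamma_UC.

Definition upset {X : Type} (le : X -> X -> Prop) (a : X -> Prop) : Prop :=
  forall x y, le x y -> a x -> a y.

(* Conditional frame (X, <=, {R_a | a upset}).  R is given on all predicates,
   but only its values on upsets matter; R_ext says R_a depends on a only as a set. *)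
Record cframe : Type := {
  W : Type;
  wle : W -> W -> Prop;
  wle_refl : forall x, wle x x;
  wle_trans : forall x y z, wle x y -> wle y z -> wle x z;
  w_inhab : W;
  R : (W -> Prop) -> W -> W -> Prop;
  R_ext : forall a b, (forall x, a x <-> b x) -> forall x y, R a x y <-> R b x y;
  (* (<= o R_a) subset (R_a o <=), composition in diagrammatic order *)
  R_coh : forall a, upset wle a -> forall x y,
      (exists z, wle x z /\ R a z y) -> exists z, R a x z /\ wle z y
}.

Fixpoint forces (F : cframe) (V : nat -> W F -> Prop) (x : W F) (f : form) : Prop :=
  match f with
  | Var n => V n x
  | Bot => False
  | And a b => forces F V x a /\ forces F V x b
  | Or a b => forces F V x a \/ forces F V x b
  | Imp a b => forall y, wle F x y -> forces F V y a -> forces F V y b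
  | Cond a b => forall y, R F (fun z => forces F V z a) x y -> forces F V y b
  end.

Definition valid_in (F : cframe) (f : form) : Prop :=
  forall V : nat -> W F -> Prop, (forall n, upset (wle F) (V n)) ->
    forall x, forces F V x f.

Definition UC_frame (F : cframe) : Prop :=
  forall a, upset (wle F) a ->
    (forall x y, R F a x y -> wle F x y) /\
    (forall x y, (exists z, R F a x z /\ wle F z y) ->
                 (exists z, R F a y z /\ wle F z y)).

(* Main.v *)
Require Import Defs.
From Stdlib Require Import Classical ClassicalEpsilon Arith Cantor Lia.

Definition ctor (t : nat) (a b : form) : form :=
  match t with 2 => And a b | 3 => Or a b | 4 => Imp a b | _ => Cond a b end.

Fixpoint dec (k n : nat) : option form :=
  match k with
  | 0 => None
  | S k' =>
    let (t, m) := of_nat n in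
    match t with
    | 0 => Some (Var m)
    | 1 => Some Bot
    | _ => let (i, j) := of_nat m in
           match dec k' i, dec k' j with
           | Some a, Some b => Some (ctor t a b)
           | _, _ => None
           end
    end
  end.

Definition dec_body (d : nat -> option form) (n : nat) : option form :=
    let (t, m) := of_nat n in
    match t with
    | 0 => Some (Var m)
    | 1 => Some Bot
    | _ => let (i, j) := of_nat m in
           match d i, d j with
           | Some a, Some b => Some (ctor t a b)
           | _, _ => None
           end
    end.

Lemma dec_eq k n : dec (S k) n = dec_body (dec k) n.
Proof. reflexivity. Qed.

Lemma dec_S k n f : dec k n = Some f -> dec (S k) n = Some f.
Proof.
  revert n f; induction k as [|k IH]; intros n f H; [discriminate|].
  rewrite dec_eq in H |- *. unfold dec_body in H |- *.
  destruct (of_nat n) as [t m]. destruct t as [|[|t]]; auto.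
  destruct (of_nat m) as [i j].
  destruct (dec k i) eqn:E1; [|discriminate].
  destruct (dec k j) eqn:E2; [|discriminate].
  rewrite (IH _ _ E1), (IH _ _ E2). exact H.
Qed.

Lemma dec_le k k' n f : k <= k' -> dec k n = Some f -> dec k' n = Some f.
Proof. induction 1; auto using dec_S. Qed.

Lemma dec_surj f : exists k n, dec k n = Some f.
Proof.
  assert (bin : forall t a b, 2 <= t -> (exists k n, dec k n = Some a) ->
     (exists k n, dec k n = Some b) -> exists k n, dec k n = Some (ctor t a b)).
  { intros t a b Ht [k1 [n1 H1]] [k2 [n2 H2]].
    exists (S (max k1 k2)), (to_nat (t, to_nat (n1, n2))).
    rewrite dec_eq; unfold dec_body. rewrite !cancel_of_to.
    destruct t as [|[|t]]; [lia|lia|].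
    rewrite (dec_le k1 (max k1 k2) _ _ ltac:(lia) H1).
    rewrite (dec_le k2 (max k1 k2) _ _ ltac:(lia) H2). reflexivity. }
  induction f.
  - exists 1, (to_nat (0, n)). rewrite dec_eq; unfold dec_body; rewrite cancel_of_to. reflexivity.
  - exists 1, (to_nat (1, 0)). rewrite dec_eq; unfold dec_body; rewrite cancel_of_to. reflexivity.
  - apply (bin 2); auto.
  - apply (bin 3); auto.
  - apply (bin 4); auto.
  - apply (bin 5); auto.
Qed.

Definition enum (n : nat) : form :=
  let (k, m) := of_nat n in match dec k m with Some f => f | None => Bot end.

Lemma enum_surj f : exists n, enum n = f.
Proof.
  destruct (dec_surj f) as [k [m H]]. exists (to_nat (k, m)).
  unfold enum. rewrite cancel_of_to, H. reflexivity.
Qed.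

Definition L := ICK Gamma_UC.

Inductive D (G : form -> Prop) : form -> Prop :=
| Dhyp a : G a -> D G a
| Dthm a : L a -> D G a
| Dmp a b : D G (Imp a b) -> D G a -> D G b.

Definition add (G : form -> Prop) (a : form) : form -> Prop := fun x => G x \/ x = a.

Lemma Lax a : ipc_axiom a -> L a.
Proof. apply ICK_ipc. Qed.

Lemma D_weak (G G' : form -> Prop) b : (forall x, G x -> G' x) -> D G b -> D G' b.
Proof. intros H; induction 1; [apply Dhyp; auto | apply Dthm; auto | eapply Dmp; eauto]. Qed.

Lemma D_L b : D (fun _ => False) b -> L b.
Proof. induction 1; [contradiction | auto | eapply ICK_mp; eauto]. Qed.

Lemma L_id a : L (Imp a a).
Proof.
  eapply ICK_mp. eapply ICK_mp. apply Lax, (A2 a (Imp a a) a).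
  apply Lax, A1. apply Lax, (A1 a a).
Qed.

Lemma ded G a b : D (add G a) b -> D G (Imp a b).
Proof.
  induction 1 as [x Hx|x Hx|x y _ IH1 _ IH2].
  - destruct Hx as [Hx|Hx]; [|subst x].
    + eapply Dmp. apply Dthm, Lax, A1. apply Dhyp; auto.
    + apply Dthm, L_id.
  - eapply Dmp. apply Dthm, Lax, A1. apply Dthm; auto.
  - eapply Dmp. eapply Dmp. apply Dthm, Lax, A2. exact IH1. exact IH2.
Qed.

Lemma Dax G a : ipc_axiom a -> D G a.
Proof. intros; apply Dthm, Lax; auto. Qed.

Lemma Dmp2 G a b c : D G (Imp a (Imp b c)) -> D G a -> D G b -> D G c.
Proof. intros; eapply Dmp; [eapply Dmp|]; eauto. Qed.

Lemma D_andI G a b : D G a -> D G b -> D G (And a b).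
Proof. intros; eapply Dmp2; [apply Dax, A5| |]; eauto. Qed.
Lemma D_andE1 G a b : D G (And a b) -> D G a.
Proof. intros; eapply Dmp; [apply Dax, A3|]; eauto. Qed.
Lemma D_andE2 G a b : D G (And a b) -> D G b.
Proof. intros; eapply Dmp; [apply Dax, A4|]; eauto. Qed.

Lemma D_add G a : D (add G a) a.
Proof. apply Dhyp; right; auto. Qed.
Lemma D_lift G a b : D G b -> D (add G a) b.
Proof. apply D_weak; intros; left; auto. Qed.

Definition closed (G : form -> Prop) := forall b, D G b -> G b.
Definition prime (G : form -> Prop) :=
  closed G /\ ~ G Bot /\ (forall a b, G (Or a b) -> G a \/ G b).

Section Lind.
Variable (G : form -> Prop) (phi : form).
Fixpoint chain (n : nat) : form -> Prop :=
  match n with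
  | 0 => G
  | S n => fun x => chain n x \/ (x = enum n /\ ~ D (add (chain n) (enum n)) phi)
  end.
Definition Lim : form -> Prop := fun x => exists n, chain n x.

Lemma chain_mono n m : n <= m -> forall x, chain n x -> chain m x.
Proof. induction 1; simpl; auto. Qed.

Lemma chain_ok : ~ D G phi -> forall n, ~ D (chain n) phi.
Proof.
  intros H0 n; induction n; simpl; auto.
  destruct (classic (D (add (chain n) (enum n)) phi)) as [H|H].
  - intros HD; apply IHn; revert HD; apply D_weak. intros x [Hx|[_ Hx]]; tauto.
  - intros HD; apply H; revert HD; apply D_weak. intros x [Hx|[Hx _]]; [left|right]; auto.
Qed.

Lemma Lim_compact b : D Lim b -> exists n, D (chain n) b.
Proof.
  induction 1 as [x Hx|x Hx|x y _ IH1 _ IH2].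
  - destruct Hx as [n Hx]; exists n; apply Dhyp; auto.
  - exists 0; apply Dthm; auto.
  - destruct IH1 as [n1 H1]; destruct IH2 as [n2 H2].
    exists (max n1 n2). apply (Dmp _ x).
    + eapply D_weak; [|exact H1]; apply chain_mono; lia.
    + eapply D_weak; [|exact H2]; apply chain_mono; lia.
Qed.

Hypothesis H0 : ~ D G phi.

Lemma Lim_ok : ~ D Lim phi.
Proof. intros H; destruct (Lim_compact _ H) as [n Hn]; eapply chain_ok; eauto. Qed.

Lemma Lim_max psi : ~ D (add Lim psi) phi -> Lim psi.
Proof.
  intros H. destruct (enum_surj psi) as [n <-].
  exists (S n). simpl. right. split; auto.
  intros HD; apply H; revert HD; apply D_weak.
  intros x [Hx|Hx]; [left; exists n; auto|right; auto].
Qed.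

Lemma Lim_closed : closed Lim.
Proof.
  intros b Hb. apply Lim_max. intros HD. apply Lim_ok.
  eapply Dmp; [apply ded; eauto|auto].
Qed.

Lemma Lim_prime : prime Lim.
Proof.
  split; [apply Lim_closed|split].
  - intros HB; apply Lim_ok. eapply Dmp; [apply Dax, A9|apply Dhyp; auto].
  - intros a b Hab. apply NNPP; intros Hn.
    assert (Ha : D (add Lim a) phi) by (apply NNPP; intros Hc; apply Hn; left; apply Lim_max; auto).
    assert (Hb : D (add Lim b) phi) by (apply NNPP; intros Hc; apply Hn; right; apply Lim_max; auto).
    apply Lim_ok. apply (Dmp _ (Or a b)); [eapply Dmp2; [apply Dax, A8| apply ded; eauto | apply ded; eauto]|].
    apply Dhyp; auto.
Qed.

Lemma Lim_incl x : G x -> Lim x.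
Proof. intros; exists 0; auto. Qed.
End Lind.

Lemma lindenbaum G phi : ~ D G phi ->
  exists Dl, prime Dl /\ (forall x, G x -> Dl x) /\ ~ Dl phi.
Proof.
  intros H. exists (Lim G phi). split; [apply Lim_prime; auto|split].
  - apply Lim_incl.
  - intros Hp; apply (Lim_ok G phi H); apply Dhyp; auto.
Qed.

Section Sound.
Variable F : cframe.

Lemma persist (V : nat -> W F -> Prop) : (forall n, upset (wle F) (V n)) ->
  forall f, upset (wle F) (fun x => forces F V x f).
Proof.
  intros HV f; induction f as [n| |a IHa b IHb|a IHa b IHb|a IHa b IHb|a IHa b IHb];
    intros x y Hxy; simpl.
  - apply HV; auto.
  - auto.
  - intros [H1 H2]; split; [eapply IHa|eapply IHb]; eauto.
  - intros [H1|H1]; [left; eapply IHa|right; eapply IHb]; eauto.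
  - intros H z Hyz Hz. apply H; auto. eapply wle_trans; eauto.
  - intros H w Hyw.
    destruct (R_coh F _ IHa x w (ex_intro _ y (conj Hxy Hyw))) as [z [Hxz Hzw]].
    eapply IHb; eauto.
Qed.

Lemma Rext' (a b : W F -> Prop) x y : (forall z, a z <-> b z) -> R F a x y -> R F b x y.
Proof. intros E; apply (proj1 (R_ext F a b E x y)). Qed.

Lemma subst_lemma (V : nat -> W F -> Prop) s f x :
  forces F V x (subst s f) <-> forces F (fun n y => forces F V y (s n)) x f.
Proof.
  revert x; induction f as [n| |a IHa b IHb|a IHa b IHb|a IHa b IHb|a IHa b IHb];
    intros x; simpl.
  - tauto.
  - tauto.
  - rewrite IHa, IHb; tauto.
  - rewrite IHa, IHb; tauto.
  - split; intros H y Hxy Hy; apply IHb; apply H; auto; apply IHa; auto.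
  - split; intros H y Hxy; apply IHb; apply H.
    + revert Hxy; apply Rext'. intros z; rewrite IHa; tauto.
    + revert Hxy; apply Rext'. intros z; rewrite IHa; tauto.
Qed.

Hypothesis HF : UC_frame F.

Lemma sound f : L f -> valid_in F f.
Proof.
  induction 1 as [a Ha|a Ha| | |s a _ IH|a b _ IH1 _ IH2|a b c _ IH|a b c _ IH];
    intros V HV x.
  - pose proof (persist V HV) as P.
    destruct Ha; simpl; intros.
    + eapply P; eauto.
    + apply (H0 y1); [eapply wle_trans; eauto|auto|apply wle_refl|].
      apply H2; auto.
    + tauto.
    + tauto.
    + split; auto; eapply P; eauto.
    + tauto.
    + tauto.
    + destruct H4; [eapply H0 | eapply H2]; eauto using wle_refl, wle_trans.
    + contradiction.
  - pose proof (persist V HV) as P.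
    destruct Ha; simpl.
    + intros y Hxy Hq z Hyz. destruct (HF _ (P p)) as [H1 _].
      exact (P q y z (H1 _ _ Hyz) Hq).
    + intros y Hxy z Hyz Hz.
      destruct (HF _ (P p)) as [_ H2].
      destruct (H2 x z (ex_intro _ y (conj Hxy Hyz))) as [u [Hzu Huz]].
      apply (P q u z Huz). apply Hz; auto.
  - simpl; split; intros y Hxy H.
    + split; intros z Hz; apply H; auto.
    + intros z Hz; destruct H as [H1 H2]; split; auto.
  - simpl; split; intros y Hxy H; auto.
  - apply subst_lemma. apply IH. intros n. apply persist; auto.
  - apply (IH1 V HV x x (wle_refl F x)). apply IH2; auto.
  - assert (E : forall z, forces F V z a <-> forces F V z b).
    { intros z; destruct (IH V HV z) as [H1 H2]; split; intros;
      [apply H1|apply H2]; auto using wle_refl. }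
    simpl; split; intros y Hxy H w Hw; apply H.
    + revert Hw; apply Rext'. intros; rewrite E; tauto.
    + revert Hw; apply Rext'. intros; rewrite E; tauto.
  - simpl; split; intros y Hxy H w Hw; destruct (IH V HV w) as [H1 H2].
    + apply (H1 w (wle_refl F w)); exact (H w Hw).
    + apply (H2 w (wle_refl F w)); exact (H w Hw).
Qed.
End Sound.

Definition s3 (a b c : form) : nat -> form :=
  fun n => match n with 0 => a | 1 => b | _ => c end.

Lemma L_conj a b c : L (Iff (Cond a (And b c)) (And (Cond a b) (Cond a c))).
Proof. exact (ICK_us _ (s3 a b c) _ (ICK_conj _)). Qed.
Lemma L_top a : L (Iff (Cond a Top) Top).
Proof. exact (ICK_us _ (s3 a a a) _ (ICK_top _)). Qed.
Lemma L_G1 a b : L (Imp b (Cond a b)).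
Proof. exact (ICK_us _ (s3 a b b) _ (ICK_gamma _ _ G1)). Qed.
Lemma L_G2 a b : L (Cond a (Imp (Cond a b) b)).
Proof. exact (ICK_us _ (s3 a b b) _ (ICK_gamma _ _ G2)). Qed.

Lemma L_iff1 x y : L (Iff x y) -> L (Imp x y).
Proof. intros H; eapply ICK_mp; [apply Lax, A3|exact H]. Qed.
Lemma L_iff2 x y : L (Iff x y) -> L (Imp y x).
Proof. intros H; eapply ICK_mp; [apply Lax, A4|exact H]. Qed.
Lemma L_iffI x y : L (Imp x y) -> L (Imp y x) -> L (Iff x y).
Proof. intros H1 H2; eapply ICK_mp; [eapply ICK_mp; [apply Lax, A5|exact H1]|exact H2]. Qed.

Definition E0 : form -> Prop := fun _ => False.

Lemma L_ded a b : D (add E0 a) b -> L (Imp a b).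
Proof. intros H; apply D_L, ded, H. Qed.

Lemma L_mono a c d : L (Imp c d) -> L (Imp (Cond a c) (Cond a d)).
Proof.
  intros H.
  assert (H1 : L (Iff c (And c d))).
  { apply L_iffI; [|apply Lax, A3]. apply L_ded.
    apply D_andI; [apply D_add|]. eapply Dmp; [apply Dthm, H|apply D_add]. }
  apply (ICK_congr _ _ _ a) in H1.
  apply L_ded. eapply D_andE2. eapply Dmp; [apply Dthm, L_iff1, L_conj|].
  eapply Dmp; [apply Dthm, L_iff1, H1|apply D_add].
Qed.

Lemma L_top' : L Top.
Proof. apply Lax, A9. Qed.

Lemma L_nec a c : L c -> L (Cond a c).
Proof.
  intros H. eapply ICK_mp; [apply (L_mono a Top c)|].
  - eapply ICK_mp; [apply Lax, A1|exact H].
  - eapply ICK_mp; [apply L_iff2, L_top|apply L_top'].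
Qed.

Lemma cl_thm G x : closed G -> L x -> G x.
Proof. intros H Hx; apply H, Dthm, Hx. Qed.
Lemma cl_mp G x y : closed G -> G (Imp x y) -> G x -> G y.
Proof. intros H H1 H2; apply H; eapply Dmp; apply Dhyp; eauto. Qed.
Lemma cl_L G x y : closed G -> L (Imp x y) -> G x -> G y.
Proof. intros H H1 H2; apply H; eapply Dmp; [apply Dthm; eauto|apply Dhyp; eauto]. Qed.

Lemma Dcond G a c : closed G -> D (fun x => G (Cond a x)) c -> G (Cond a c).
Proof.
  intros HG; induction 1 as [x Hx|x Hx|x y _ IH1 _ IH2]; auto.
  - apply cl_thm; auto. apply L_nec; auto.
  - assert (H : G (Cond a (And (Imp x y) x))).
    { eapply cl_L; [auto|apply L_iff2, L_conj|]. apply HG.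
      apply D_andI; apply Dhyp; auto. }
    eapply cl_L; [auto| |exact H]. apply L_mono.
    apply L_ded. eapply Dmp; [eapply D_andE1, D_add|eapply D_andE2, D_add].
Qed.

Definition CW := {G : form -> Prop | prime G}.
Definition cle (G H : CW) : Prop := forall x, proj1_sig G x -> proj1_sig H x.
Definition CR (A : CW -> Prop) (G H : CW) : Prop :=
  cle G H /\ forall phi chi, (forall T : CW, A T <-> proj1_sig T phi) ->
     proj1_sig G (Cond phi chi) -> proj1_sig H chi.

Definition triv_frame : cframe.
Proof.
  refine {| W := unit; wle := fun _ _ => True; w_inhab := tt;
            R := fun _ _ _ => True |}; try tauto.
Defined.

Lemma L_consistent : ~ L Bot.
Proof.
  intros H. refine (sound triv_frame _ Bot H (fun _ _ => True) _ tt).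
  - intros a _; split; [auto|]. intros x y _; exists y; simpl; auto.
  - intros n x y _ _; exact I.
Qed.

Lemma CW_inhab : CW.
Proof.
  assert (H : ~ D E0 Bot) by (intros H; apply L_consistent, D_L, H).
  destruct (constructive_indefinite_description _ (lindenbaum E0 Bot H)) as [G [HG _]].
  exact (exist _ G HG).
Qed.

Definition canon : cframe.
Proof.
  refine {| W := CW; wle := cle; w_inhab := CW_inhab; R := CR |}.
  - intros x y H; exact H.
  - intros x y z H1 H2 u Hu; auto.
  - intros a b E x y; unfold CR; split; intros [H1 H2]; split; auto;
      intros phi chi Hp; apply H2; intros T; rewrite <- Hp; rewrite E; tauto.
  - intros a _ x y [z [Hxz [Hzy Hz]]]. exists y. split.
    + split; [intros u Hu; apply Hzy, Hxz, Hu|].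
      intros phi chi Hp Hc. apply (Hz phi chi Hp). apply Hxz; exact Hc.
    + intros u Hu; exact Hu.
Defined.

Lemma canon_UC : UC_frame canon.
Proof.
  intros a _; split.
  - intros x y [H _]; exact H.
  - intros x y [z [[Hxz Hz] Hzy]]. exists y; split; [|intros u Hu; exact Hu].
    split; [intros u Hu; exact Hu|].
    intros phi chi Hp Hc.
    destruct (proj2_sig x) as [Cx _]. destruct (proj2_sig y) as [Cy _].
    assert (H : proj1_sig z (Imp (Cond phi chi) chi)).
    { apply (Hz phi); auto. apply cl_thm; auto. apply L_G2. }
    eapply cl_mp; [exact Cy| apply Hzy, H | exact Hc].
Qed.

Definition cV (n : nat) (T : W canon) : Prop := proj1_sig (T : CW) (Var n).

Lemma cV_up n : upset (wle canon) (cV n).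
Proof. intros x y H; apply H. Qed.

Lemma L_of_prime phi psi :
  (forall T : CW, proj1_sig T phi -> proj1_sig T psi) -> L (Imp phi psi).
Proof.
  intros H. apply NNPP; intros Hn.
  assert (H1 : ~ D (add E0 phi) psi) by (intros Hd; apply Hn, L_ded, Hd).
  destruct (lindenbaum _ _ H1) as [G [PG [HG NG]]].
  apply NG, (H (exist _ G PG)). apply HG; right; auto.
Qed.

Lemma truth f : forall T : W canon, forces canon cV T f <-> proj1_sig (T : CW) f.
Proof.
  induction f as [n| |a IHa b IHb|a IHa b IHb|a IHa b IHb|a IHa b IHb];
    intros T; destruct (proj2_sig T) as [CT [BT PT]]; simpl.
  - tauto.
  - split; [tauto|intros H; apply BT, H].
  - rewrite IHa, IHb. split.
    + intros [H1 H2]; apply CT, D_andI; apply Dhyp; auto.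
    + intros H; split; apply CT; [eapply D_andE1|eapply D_andE2]; apply Dhyp; eauto.
  - rewrite IHa, IHb. split.
    + intros [H|H]; apply CT.
      * eapply Dmp; [apply Dax, (A6 a b) | apply Dhyp; exact H].
      * eapply Dmp; [apply Dax, (A7 a b) | apply Dhyp; exact H].
    + apply PT.
  - split.
    + intros H. apply NNPP; intros Hn.
      assert (H1 : ~ D (add (proj1_sig T) a) b) by (intros Hd; apply Hn, CT, ded, Hd).
      destruct (lindenbaum _ _ H1) as [G [PG [HG NG]]].
      apply NG. apply (IHb (exist _ G PG)). apply H.
      * intros x Hx; apply HG; left; exact Hx.
      * apply IHa. apply HG; right; auto.
    + intros H y Hy Ha. apply IHb. apply IHa in Ha.
      destruct (proj2_sig y) as [Cy _]. eapply cl_mp; [exact Cy| apply Hy, H| exact Ha].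
  - split.
    + intros H. apply NNPP; intros Hn.
      assert (H1 : ~ D (fun c => proj1_sig T (Cond a c)) b) by (intros Hd; apply Hn, Dcond; auto).
      destruct (lindenbaum _ _ H1) as [G [PG [HG NG]]].
      apply NG. apply (IHb (exist _ G PG)). apply H.
      split.
      * intros x Hx; apply HG. simpl. eapply cl_L; [exact CT|apply L_G1|exact Hx].
      * intros phi chi Hp Hc. apply HG.
        assert (E : L (Imp phi a)).
        { apply L_of_prime. intros T' HT'. apply IHa, Hp, HT'. }
        assert (E' : L (Imp a phi)).
        { apply L_of_prime. intros T' HT'. apply Hp, IHa, HT'. }
        assert (E2 := ICK_congl _ _ _ chi (L_iffI _ _ E E')).
        eapply cl_L; [exact CT|apply L_iff1, E2|exact Hc].
    + intros H y [Hy1 Hy2]. apply IHb. apply (Hy2 a); auto.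
Qed.

Theorem theorem7p18 :
  forall f : form, sCond_ACL_UC f <-> (forall F : cframe, UC_frame F -> valid_in F f).
Proof.
  intros f; split.
  - intros H F HF; apply sound; auto.
  - intros H. apply NNPP; intros Hn.
    assert (H1 : ~ D E0 f) by (intros Hd; apply Hn, D_L, Hd).
    destruct (lindenbaum _ _ H1) as [G [PG [_ NG]]].
    apply NG. apply (truth f (exist _ G PG)). apply H.
    + apply canon_UC.
    + apply cV_up.
Qed.
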